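(* Let $k, m, s$ be positive integers with $m \geq 2$, $s \leq k-2$ and $m 2^{-s} \leq 1/4$, let $n = km$, and let $\mathcal{F} \subset \mathcal{P}([n])$ be constructed as follows: partition $[n]$ into blocks $B_1,\ldots,B_m$ with $|B_i| = k$, choose $T_i \subset B_i$ with $|T_i| = s$, put $T = \bigcup_i T_i$, and let $\mathcal{F}$ be the union-closed family generated by $\{B_i \cup \{t\} : i \in [m],\ t \in T\}$. Then: (i) for every $x \in [n]\setminus T$, $\frac{1}{m} \leq \gamma_x \leq \frac{2}{m}$; (ii) for every $x \in T$, $\frac12 \leq \gamma_x \leq 1$; (iii) $\displaystyle \frac{1}{m} \leq \mathrm{AOD}(\mathcal{F}) \leq \frac{2}{m} + \frac{m^2 s}{n}$.
   Context: $[n] = \{1,\ldots,n\}$. A family of sets is union-closed if it contains the union of any two of its members; the union-closed family generated by $\mathcal{G}$ is the smallest union-closed family containing $\mathcal{G}$. For a finite nonempty family $\mathcal{F} \subset \mathcal{P}(X)$ and $x \in X$, the abundance is $\gamma_x = |\{A \in \mathcal{F} : x \in A\}|/|\mathcal{F}|$. For $\mathcal{F} \neq \emptyset,\{\emptyset\}$, the average overlap density is $\mathrm{AOD}(\mathcal{F}) = \frac{1}{|\mathcal{F}\setminus\{\emptyset\}|}\sum_{A \in \mathcal{F}\setminus\{\emptyset\}} \frac{1}{|A|}\sum_{x \in A}\gamma_x$. *)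

(* Defs.v *)
From mathcomp Require Import all_boot all_order all_algebra.
Set Implicit Arguments. Unset Strict Implicit. Unset Printing Implicit Defensive.
Import Order.TTheory GRing.Theory Num.Theory.
Local Open Scope ring_scope.

Section Defs.
Variable T : finType.

Definition union_closed (F : {set {set T}}) : bool :=
  [forall A in F, forall B in F, (A :|: B) \in F].

Definition uc_gen (G : {set {set T}}) : {set {set T}} :=
  \bigcap_(H : {set {set T}} | union_closed H && (G \subset H)) H.

Definition abundance (F : {set {set T}}) (x : T) : rat :=
  #|[set A in F | x \in A]|%:R / #|F|%:R.

Definition AOD (F : {set {set T}}) : rat :=
  (#|F :\ set0|%:R)^-1 *
  \sum_(A in F :\ set0) ((#|A|%:R)^-1 * \sum_(x in A) abundance F x).
End Defs.

(* Main.v *)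
Require Import Defs.
From mathcomp Require Import all_boot all_order all_algebra.
From mathcomp Require Import zify ring lra.
Import Order.TTheory GRing.Theory Num.Theory.
Local Open Scope ring_scope.
Set Implicit Arguments. Unset Strict Implicit.

Lemma ucP (T : finType) (H : {set {set T}}) X Y :
  union_closed H -> X \in H -> Y \in H -> X :|: Y \in H.
Proof.
move=> /forallP hH hX hY.
by move: (hH X) => /implyP /(_ hX) /forallP /(_ Y) /implyP /(_ hY).
Qed.

Lemma uc_bigcup (T : finType) (H : {set {set T}}) (r : seq {set T}) :
  union_closed H -> all (mem H) r -> r != [::] -> \bigcup_(X <- r) X \in H.
Proof.
move=> hH; elim: r => [//|X r IH] /= /andP [hX hr] _.
rewrite big_cons; case: r IH hr => [|Y r] IH hr.
  by rewrite big_nil setU0.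
by apply: ucP => //; apply: IH.
Qed.

Lemma uc_gen_sub (T : finType) (G H : {set {set T}}) :
  union_closed H -> G \subset H -> uc_gen G \subset H.
Proof.
move=> hH hG; rewrite /uc_gen.
by apply: (@bigcap_inf _ _ H); rewrite hH hG.
Qed.

Lemma uc_gen_mem (T : finType) (G : {set {set T}}) A :
  (forall H, union_closed H -> G \subset H -> A \in H) -> A \in uc_gen G.
Proof.
move=> h; apply/bigcapP => H /andP [hH hG]; exact: h.
Qed.

Lemma card_bigcup_le (T I : finType) (P : pred I) (F : I -> {set T}) :
  (#|\bigcup_(i | P i) F i| <= \sum_(i | P i) #|F i|)%N.
Proof.
apply: (big_ind2 (fun (U : {set T}) (n : nat) => #|U| <= n)%N).
- by rewrite cards0.
- move=> U1 n1 U2 n2 h1 h2; have := cardsUI U1 U2; lia.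
- by [].
Qed.

Definition Sr (T I : finType) (B : I -> {set T}) (O : I -> {set {set T}})
  (r : seq I) : {set {set T}} :=
  [set A : {set T} | (A \subset \bigcup_(i <- r) B i)
                     && all (fun i => A :&: B i \in O i) r].

Arguments Sr {T I} B O r.

Lemma disj_bigcup {T I : finType} {B : I -> {set T}} {i} {r : seq I} :
  (forall i j, i != j -> [disjoint B i & B j]) -> i \notin r ->
  B i :&: \bigcup_(j <- r) B j = set0.
Proof.
move=> hd; elim: r => [|j r IH]; first by rewrite big_nil setI0.
rewrite in_cons negb_or => /andP [hij hr].
by rewrite big_cons setIUr IH // setU0 disjoint_setI0 // hd.
Qed.

Lemma subset_disj (T : finType) (Y U V : {set T}) :
  Y \subset U -> V :&: U = set0 -> Y :&: V = set0.
Proof.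
move=> hY hVU; apply/eqP; rewrite setIC -subset0 -hVU; exact: setIS.
Qed.

Lemma card_Sr (T I : finType) (B : I -> {set T}) (O : I -> {set {set T}})
  (r : seq I) :
  (forall i j, i != j -> [disjoint B i & B j]) ->
  (forall i X, X \in O i -> X \subset B i) ->
  uniq r -> #|Sr B O r| = (\prod_(i <- r) #|O i|)%N.
Proof.
move=> hd hO; elim: r => [|i r IH].
  move=> _; rewrite big_nil.
  have -> : Sr B O [::] = [set set0].
    by apply/setP => A; rewrite !inE big_nil subset0 andbT.
  by rewrite cards1.
move=> /= /andP [hi hr]; rewrite big_cons -IH //.
have hdi := disj_bigcup hd hi.
have -> : Sr B O (i :: r) =
    [set p.1 :|: p.2 | p in setX (O i) (Sr B O r)].
  apply/setP => A; apply/idP/idP.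
  - rewrite inE big_cons /= => /andP [hA /andP [hAi hAr]].
    apply/imsetP; exists (A :&: B i, A :\: B i).
      rewrite inE /= hAi /= inE; apply/andP; split.
        apply/subsetP => x; rewrite inE => /andP [hx hxA].
        move/subsetP: hA => /(_ x hxA); rewrite inE.
        by rewrite (negbTE hx).
      apply/allP => j hj; move/allP: hAr => /(_ j hj).
      have hij : i != j by apply: contraNneq hi => ->.
      suff -> : (A :\: B i) :&: B j = A :&: B j by [].
      apply/setP => x; rewrite !inE; case hxj: (x \in B j); last by rewrite !andbF.
      have : x \notin B i.
        apply/negP => hxi; move: (hd _ _ hij) => /disjoint_setI0 /setP /(_ x).
        by rewrite !inE hxi hxj.
      by move=> ->.
    by rewrite /=; apply/setP => x; rewrite !inE; case: (x \in B i); case: (x \in A).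
  - case/imsetP => [[X Y]] /setXP [/= hX hY] ->.
    move: hY; rewrite inE => /andP [hY hYr].
    have hXB := hO _ _ hX.
    have hYi : Y :&: B i = set0 := subset_disj hY hdi.
    rewrite inE big_cons /=; apply/and3P; split.
    + by apply: setUSS.
    + by rewrite setIUl (setIidPl hXB) hYi setU0.
    + apply/allP => j hj; move/allP: hYr => /(_ j hj).
      have hij : i != j by apply: contraNneq hi => ->.
      rewrite setIUl; have -> : X :&: B j = set0.
        apply/setP => x; move: (hd _ _ hij) => /disjoint_setI0 /setP /(_ x).
        rewrite !inE; move/subsetP: hXB => /(_ x).
        by case: (x \in X) => //= ->.
      by rewrite set0U.
rewrite card_in_imset ?cardsX //.
move=> [X1 Y1] [X2 Y2] /setXP [/= h1 h1'] /setXP [/= h2 h2'] /= e.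
have hX1 := hO _ _ h1; have hX2 := hO _ _ h2.
move: h1' h2'; rewrite !inE => /andP [hY1 _] /andP [hY2 _].
have dY (Y : {set T}) : Y \subset \bigcup_(j <- r) B j -> Y :&: B i = set0.
  by move=> hY; apply: subset_disj hY hdi.
have eX : X1 = X2.
  have := congr1 (fun Z => Z :&: B i) e; rewrite /= !setIUl (setIidPl hX1).
  by rewrite (setIidPl hX2) !dY // !setU0.
have eY : Y1 = Y2.
  have := congr1 (fun Z => Z :\: B i) e; rewrite /= !setDUl.
  have hd1 (X : {set T}) : X \subset B i -> X :\: B i = set0.
    by move=> hX; apply/eqP; rewrite setD_eq0.
  have hd2 (Y : {set T}) : Y \subset \bigcup_(j <- r) B j -> Y :\: B i = Y.
    by move=> hY; apply/setDidPl; rewrite -setI_eq0 dY.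
  by rewrite (hd1 X1 hX1) (hd1 X2 hX2) !set0U (hd2 Y1 hY1) (hd2 Y2 hY2).
by rewrite eX eY.
Qed.


Lemma numL (a p : nat) : ((a+1)^p.+1 <= p.+1*(a+1)^p + a^p.+1)%N.
Proof.
elim: p => [|p IH]; first by rewrite expn1 expn0; lia.
have h1 : (a ^ p.+1 <= (a+1)^p.+1)%N by rewrite leq_exp2r //; lia.
rewrite !expnS in IH h1 *.
move: IH h1; set Z := ((a+1)^p)%N; set W := (a ^ p)%N => IH h1.
have h2 := leq_mul (leqnn (a+1)) IH.
lia.
Qed.

Lemma bern (a q : nat) : (a^q * (a+q+1) <= (a+1)^q.+1)%N.
Proof.
elim: q => [|q IH]; first by rewrite expn0 expn1; lia.
rewrite !expnS in IH *.
move: IH; set Z := ((a+1)^q)%N; set W := (a ^ q)%N => IH.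
have h2 := leq_mul (leqnn (a+1)) IH.
lia.
Qed.

Lemma numU (a q : nat) : (q + 2 <= a)%N ->
  ((a+1)^q.+1 * q.+2 + 2 * (a^q.+2) <= 2 * (a+1)^q.+2)%N.
Proof.
move=> ha; have hb := bern a q.
have -> : (a ^ q.+2 = a * a * a^q)%N by rewrite !expnS mulnA.
have -> : ((a+1) ^ q.+2 = (a+1) * (a+1)^q.+1)%N by rewrite expnS.
move: hb; set X := (a ^ q)%N; set Y := ((a+1)^q.+1)%N => hb.
have [e ea] : exists e, a = (e + (q+2))%N by exists (a - (q+2))%N; lia.
rewrite ea in hb *.
have h1 := leq_mul (leqnn (2*e+q+4)) hb.
have h2 : (2*(e+(q+2))*(e+(q+2)) <= (2*e+q+4)*(e+(q+2)+q+1))%N by nia.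
have h3 := leq_mul h2 (leqnn X).
lia.
Qed.

Lemma ratdiv_le (p q r u : nat) : (0 < q)%N -> (0 < u)%N ->
  (p%:R / q%:R <= r%:R / u%:R :> rat) = (p * u <= r * q)%N.
Proof.
move=> hq hu.
rewrite ler_pdivlMr ?ltr0n // mulrAC ler_pdivrMr ?ltr0n //.
by rewrite -!natrM ler_nat.
Qed.

Lemma avg_bounds (X : finType) (S : {set X}) (f : X -> rat) lo hi :
  S != set0 -> (forall A, A \in S -> lo <= f A <= hi) ->
  lo <= (#|S|%:R)^-1 * \sum_(A in S) f A <= hi.
Proof.
move=> hS hf.
have hc : (0 < #|S|%:R :> rat) by rewrite ltr0n card_gt0.
have hlo : \sum_(A in S) lo <= \sum_(A in S) f A.
  by apply: ler_sum => A hA; case/andP: (hf A hA).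
have hhi : \sum_(A in S) f A <= \sum_(A in S) hi.
  by apply: ler_sum => A hA; case/andP: (hf A hA).
rewrite !sumr_const in hlo hhi.
rewrite -mulr_natl in hlo; rewrite -mulr_natl in hhi.
by apply/andP; split; [rewrite ler_pdivlMl | rewrite ler_pdivrMl].
Qed.


Definition Qf (m n : nat) (B Ts : 'I_m -> {set 'I_n}) (A : {set 'I_n}) : bool :=
  [forall i, (A :&: B i == B i) || (A :&: B i \subset Ts i)]
  && [exists i, B i \subset A].

Lemma Fchar (n m s : nat) (B Ts : 'I_m -> {set 'I_n}) :
  (0 < s)%N ->
  (forall i j, i != j -> [disjoint B i & B j]) ->
  (\bigcup_(i < m) B i = [set: 'I_n]) ->
  (forall i, Ts i \subset B i) ->
  (forall i, #|Ts i| = s) ->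
  uc_gen [set B i :|: [set t] | i : 'I_m, t : 'I_n in \bigcup_(i < m) Ts i]
  = [set A | Qf B Ts A].
Proof.
move=> s0 Bd Bcov TB Tk.
have Tne : forall j, exists t, t \in Ts j.
  move=> j; have : Ts j != set0 by rewrite -card_gt0 Tk.
  by case/set0Pn => t ht; exists t.
apply/eqP; rewrite eqEsubset; apply/andP; split.
- apply: uc_gen_sub.
  + apply/forallP => X; apply/implyP => hX; apply/forallP => Y; apply/implyP => hY.
    rewrite !inE in hX hY *; case/andP: hX => hX1 hX2; case/andP: hY => hY1 hY2.
    apply/andP; split.
    * apply/forallP => i; move/forallP: hX1 => /(_ i); move/forallP: hY1 => /(_ i).
      rewrite setIUl.
      case/orP => [/eqP e2 | s2]; case/orP => [/eqP e1 | s1].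
      -- by rewrite e1 e2 setUid eqxx.
      -- by rewrite e2; apply/orP; left; apply/eqP/setUidPr; apply: subsetIr.
      -- by rewrite e1; apply/orP; left; apply/eqP/setUidPl; apply: subsetIr.
      -- by apply/orP; right; rewrite subUset s1 s2.
    * case/existsP: hX2 => i hi; apply/existsP; exists i.
      by apply: subset_trans hi (subsetUl _ _).
  + apply/subsetP => g /imset2P [i t _ ht ->].
    case/bigcupP: ht => l _ htl.
    rewrite inE; apply/andP; split; last first.
      by apply/existsP; exists i; apply: subsetUl.
    apply/forallP => j; case: (eqVneq i j) => [<- | hij].
      by rewrite setIUl setIid; apply/orP; left; apply/eqP/setUidPl; apply: subsetIr.
    rewrite setIUl (disjoint_setI0 (Bd _ _ hij)) set0U; apply/orP; right.
    apply/subsetP => x; rewrite !inE => /andP [/eqP -> htj].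
    case: (eqVneq l j) => [<- //| hlj].
    have := disjoint_setI0 (Bd _ _ hlj) => /setP /(_ t).
    by rewrite !inE htj andbT (subsetP (TB l) t htl).
- apply/subsetP => A; rewrite inE => /andP [hA1 /existsP [i0 hi0]].
  apply: uc_gen_mem => H hH hG.
  have inG : forall j t, t \in Ts j -> B i0 :|: [set t] \in H.
    move=> j t ht; apply: (subsetP hG); apply: imset2_f => //.
    by apply/bigcupP; exists j.
  have hgen : forall x, x \in A -> exists2 g, g \in H & (x \in g) && (g \subset A).
    move=> x hx.
    have : x \in \bigcup_(i < m) B i by rewrite Bcov.
    case/bigcupP => j _ hxj.
    move/forallP: hA1 => /(_ j) /orP [/eqP e | sub].
    + have hBj : B j \subset A by apply/setIidPr.
      case: (Tne j) => t ht.
      exists (B j :|: [set t]).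
        apply: (subsetP hG); apply: imset2_f => //.
        by apply/bigcupP; exists j.
      rewrite inE hxj /= subUset hBj /= sub1set.
      exact: (subsetP hBj) (subsetP (TB j) _ ht).
    + have hxT : x \in Ts j by apply: (subsetP sub); rewrite inE hx hxj.
      exists (B i0 :|: [set x]); first exact: inG hxT.
      by rewrite !inE eqxx orbT /= subUset hi0 sub1set hx.
  set S := [set g in H | g \subset A].
  have eA : A = \bigcup_(g <- enum S) g.
    rewrite big_enum /=; apply/eqP; rewrite eqEsubset; apply/andP; split.
    + apply/subsetP => x hx; case: (hgen x hx) => g hg /andP [hxg hgA].
      by apply/bigcupP; exists g => //; rewrite inE hg hgA.
    + by apply/bigcupsP => g; rewrite inE => /andP [_ h].
  rewrite {1}eA; apply: uc_bigcup hH _ _.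
  + by apply/allP => g; rewrite mem_enum inE => /andP [h _].
  + case: (Tne i0) => x hx.
    have hxA : x \in A by apply: (subsetP hi0); apply: (subsetP (TB i0)).
    case: (hgen x hxA) => g hg /andP [_ hgA].
    apply/eqP => e.
    have : g \in enum S by rewrite mem_enum inE hg hgA.
    by rewrite e.
Qed.


Lemma numLm (a m : nat) : (0 < m)%N -> (a.+1^m <= m*a.+1^m.-1 + a^m)%N.
Proof. by case: m => [//|p] _; have := numL a p; rewrite addn1. Qed.

Lemma numUm (a m : nat) : (2 <= m)%N -> (m <= a)%N ->
  (a.+1^m.-1 * m + 2 * a^m <= 2 * a.+1^m)%N.
Proof.
case: m => [|[|q]] // _ hq; have := numU (a := a) (q := q); rewrite addn1.
by apply; lia.
Qed.

Lemma ratdiv_le1 (q r u : nat) : (0 < q)%N -> (0 < u)%N ->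
  (1 / q%:R <= r%:R / u%:R :> rat) = (u <= r * q)%N.
Proof.
move=> hq hu; rewrite -[1 / _]/(1%:R / q%:R : rat).
by rewrite ratdiv_le // mul1n.
Qed.

Lemma ratdiv_le11 (q u : nat) : (0 < q)%N -> (0 < u)%N ->
  (1 / q%:R <= 1 / u%:R :> rat) = (u <= q)%N.
Proof.
move=> hq hu; rewrite -[1 / u%:R]/(1%:R / u%:R : rat).
by rewrite ratdiv_le1 // mul1n.
Qed.

Lemma uc_gen_closed (T : finType) (G : {set {set T}}) X Y :
  X \in uc_gen G -> Y \in uc_gen G -> X :|: Y \in uc_gen G.
Proof.
move=> /bigcapP hX /bigcapP hY; apply/bigcapP => H /andP [hH hG].
by apply: ucP => //; [apply: hX | apply: hY]; rewrite hH hG.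
Qed.

Lemma uc_gen_G (T : finType) (G : {set {set T}}) X :
  X \in G -> X \in uc_gen G.
Proof.
move=> hX; apply/bigcapP => H /andP [_ hG]; exact: (subsetP hG).
Qed.

Unset Implicit Arguments.
Set Strict Implicit.

Theorem mainTheorem3 (k m s : nat)
  (B : 'I_m -> {set 'I_(k * m)}) (Ts : 'I_m -> {set 'I_(k * m)}) :
  (0 < k)%N -> (0 < s)%N -> (2 <= m)%N -> (s + 2 <= k)%N ->
  (m%:R / 2%:R ^+ s <= 1 / 4 :> rat) ->
  (* B_1, ..., B_m partition [n] into blocks of size k *)
  (forall i j, i != j -> [disjoint B i & B j]) ->
  (\bigcup_(i < m) B i = [set: 'I_(k * m)]) ->
  (forall i, #|B i| = k) ->
  (* T_i ⊆ B_i with |T_i| = s *)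
  (forall i, Ts i \subset B i) ->
  (forall i, #|Ts i| = s) ->
  let T := \bigcup_(i < m) Ts i in
  let F := uc_gen [set B i :|: [set t] | i : 'I_m, t : 'I_(k * m) in T] in
  [/\ (forall x, x \notin T ->
         1 / m%:R <= abundance F x <= 2 / m%:R),
      (forall x, x \in T -> 1 / 2 <= abundance F x <= 1)
    & 1 / m%:R <= AOD F
        <= 2 / m%:R + (m ^ 2 * s)%:R / (k * m)%:R].
Proof.
move=> k0 s0 m2 sk hm Bd Bcov Bk TB Tk T F.
set a := (2 ^ s)%N.
have ha : (4 * m <= a)%N.
  have h : (m%:R <= 1/4 * a%:R :> rat).
    by rewrite -ler_pdivrMr ?ltr0n ?expn_gt0 // /a natrX.
  have h2 : ((4 * m)%:R <= a%:R :> rat) by rewrite natrM; lra.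
  by rewrite ler_nat in h2.
have hF : F = [set A | Qf B Ts A] by rewrite /F /T; exact: (Fchar s0 Bd Bcov TB Tk).
have Bnot : forall i, ~~ (B i \subset Ts i).
  by move=> i; apply/negP => h; have := subset_leq_card h; rewrite Bk Tk; lia.
pose O1 i := B i |: powerset (Ts i).
pose O0 i := powerset (Ts i).
have hO1 : forall i X, X \in O1 i -> X \subset B i.
  move=> i X; rewrite /O1 in_setU1 powersetE => /orP [/eqP -> //| h].
  exact: subset_trans h (TB i).
have hO0 : forall i X, X \in O0 i -> X \subset B i.
  by move=> i X; rewrite /O0 powersetE => h; exact: subset_trans h (TB i).
have cO1 : forall i, #|O1 i| = a.+1.
  move=> i; rewrite /O1 cardsU1 card_powerset Tk powersetE (negbTE (Bnot i)).
  by rewrite add1n.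
have cO0 : forall i, #|O0 i| = a by move=> i; rewrite /O0 card_powerset Tk.
pose r := index_enum 'I_m.
have Bcov' : \bigcup_(i <- r) B i = setT := Bcov.
have hSr : forall O A, (A \in Sr B O r) = [forall i, A :&: B i \in O i].
  move=> O A; rewrite inE Bcov' subsetT /=.
  apply/allP/forallP => h i; [exact: h _ (mem_index_enum i) | by move=> _; apply: h].
have ur : uniq r := index_enum_uniq _.
have cU1 : #|Sr B O1 r| = (a.+1 ^ m)%N.
  rewrite card_Sr // (eq_bigr (fun _ => a.+1)) //.
  by rewrite prod_nat_const card_ord.
have cU0 : #|Sr B O0 r| = (a ^ m)%N.
  rewrite card_Sr // (eq_bigr (fun _ => a)) //.
  by rewrite prod_nat_const card_ord.
have memF : forall A, (A \in F) =
    [forall i, A :&: B i \in O1 i] && ~~ [forall i, A :&: B i \in O0 i].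
  move=> A; rewrite hF inE /Qf.
  have -> : [forall i, (A :&: B i == B i) || (A :&: B i \subset Ts i)] =
      [forall i, A :&: B i \in O1 i].
    by apply: eq_forallb => i; rewrite /O1 in_setU1 powersetE.
  case h1: [forall i, A :&: B i \in O1 i] => //=.
  rewrite negb_forall; apply/existsP/existsP => [[i hi] | [i hi]]; exists i.
    by rewrite /O0 powersetE (setIidPr hi) Bnot.
  move: (forallP h1 i); rewrite /O1 in_setU1 => /orP [/eqP e | h].
    by apply/setIidPr.
  by rewrite h in hi.
have U01 : Sr B O0 r \subset Sr B O1 r.
  apply/subsetP => A; rewrite !hSr => /forallP h; apply/forallP => i.
  by rewrite /O1 in_setU1 (h i) orbT.
have hFU : F = Sr B O1 r :\: Sr B O0 r.
  by apply/setP => A; rewrite memF in_setD !hSr andbC.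
have cardF : (#|F| + a ^ m = a.+1 ^ m)%N.
  have := cardsID (Sr B O0 r) (Sr B O1 r).
  by rewrite (setIidPr U01) cU0 cU1 -hFU addnC.
have m0 : (0 < m)%N by lia.
have Fpos : (0 < #|F|)%N.
  have : (a ^ m < a.+1 ^ m)%N by rewrite ltn_exp2r.
  lia.
have gle1 : forall x, abundance F x <= 1.
  move=> x; rewrite /abundance ler_pdivrMr ?ltr0n // mul1r ler_nat.
  by apply: subset_leq_card; apply/subsetP => A; rewrite inE => /andP [].

have blk : forall x, exists j, x \in B j.
  move=> x; have : x \in \bigcup_(i < m) B i by rewrite Bcov.
  by case/bigcupP => j _ hx; exists j.
have part1 : forall x, x \notin T -> 1 / m%:R <= abundance F x <= 2 / m%:R.
  move=> x hx; case: (blk x) => j hxj.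
  pose Oj i := if i == j then [set B j] else O1 i.
  have hOj : forall i X, X \in Oj i -> X \subset B i.
    move=> i X; rewrite /Oj; case: eqVneq => [-> | _]; last exact: hO1.
    by rewrite in_set1 => /eqP ->.
  have cUj : #|Sr B Oj r| = (a.+1 ^ m.-1)%N.
    rewrite card_Sr // (bigD1 j) //= /Oj eqxx cards1 mul1n.
    rewrite (eq_bigr (fun _ => a.+1)); last by move=> i /negbTE ->.
    by rewrite prod_nat_const cardC1 card_ord.
  have eS : [set A in F | x \in A] = Sr B Oj r.
    apply/setP => A; rewrite hSr in_set memF; apply/idP/idP.
    - case/andP => [/andP [h1 h0] hxA]; apply/forallP => i; rewrite /Oj.
      case: eqVneq => [-> | _]; last exact: (forallP h1 i).
      rewrite in_set1; move: (forallP h1 j); rewrite /O1 in_setU1 powersetE.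
      case/orP => [// | hsub]; exfalso; move/negP: hx; apply.
      apply/bigcupP; exists j => //; apply: (subsetP hsub); by rewrite inE hxA.
    - move=> /forallP h; have hj := h j; rewrite /Oj eqxx in_set1 in hj.
      have h1 : [forall i, A :&: B i \in O1 i].
        apply/forallP => i; move: (h i); rewrite /Oj.
        case: eqVneq => [-> _ | _ //]; by rewrite /O1 in_setU1 hj.
      rewrite h1 /= negb_forall; apply/andP; split.
        by apply/existsP; exists j; rewrite /O0 powersetE (eqP hj) Bnot.
      by move/eqP: hj => /setIidPr /subsetP; apply.
  rewrite /abundance eS cUj; apply/andP; split.
    rewrite ratdiv_le1 //; have := numLm a m0; lia.
  have hma : (m <= a)%N by lia.
  rewrite ratdiv_le //; have := numUm m2 hma; lia.
have part2 : forall x, x \in T -> 1 / 2 <= abundance F x <= 1.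
  move=> x hx; rewrite gle1 andbT.
  case/bigcupP: hx => j _ hxj.
  set P := [set A in F | x \in A]; set D := [set A in F | x \notin A].
  have cPD : (#|P| + #|D| = #|F|)%N.
    have e1 : P = F :&: [set A : {set 'I_(k * m)} | x \in A].
      by apply/setP => A; rewrite !inE.
    have e2 : D = F :\: [set A : {set 'I_(k * m)} | x \in A].
      by apply/setP => A; rewrite !inE andbC.
    by rewrite e1 e2 cardsID.
  have cD : (#|D| <= #|P|)%N.
    rewrite -(@card_in_imset _ _ (fun A => x |: A) D).
      apply: subset_leq_card; apply/subsetP => A' /imsetP [A hA ->].
      move: hA; rewrite in_set => /andP [hAF _]; rewrite in_set setU11 andbT.
      have /existsP [i0 hi0] : [exists i, B i \subset A] by move: hAF; rewrite hF inE => /andP [].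
      have hg : B i0 :|: [set x] \in F.
        apply: uc_gen_G; apply: imset2_f => //.
        by apply/bigcupP; exists j.
      have -> : x |: A = (B i0 :|: [set x]) :|: A.
        by rewrite setUAC (setUidPr hi0) setUC.
      exact: (uc_gen_closed hg hAF).
    move=> A1 A2; rewrite !inE => /andP [_ h1] /andP [_ h2] e.
    by rewrite -(setU1K h1) e setU1K.
  rewrite /abundance -/P ratdiv_le1 //; lia.
split => //.

have gge : forall x, 1 / m%:R <= abundance F x.
  move=> x; case hx: (x \in T).
    case/andP: (part2 x hx) => h _; apply: le_trans h.
    by rewrite ratdiv_le11.
  by case/andP: (part1 x (negbT hx)).
have hcard : forall A, A \in F -> (k <= #|A|)%N.
  move=> A; rewrite hF inE => /andP [_ /existsP [i hi]].
  by move: (subset_leq_card hi); rewrite Bk.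
have hT : (#|T| <= m * s)%N.
  apply: leq_trans (card_bigcup_le _ _) _.
  by rewrite (eq_bigr (fun _ => s)) // sum_nat_const card_ord.
pose j0 : 'I_m := Ordinal m0.
have : Ts j0 != set0 by rewrite -card_gt0 Tk.
case/set0Pn => t0 _.
rewrite /AOD; apply: avg_bounds.
  apply/set0Pn; exists setT; rewrite in_setD1; apply/andP; split.
    by apply/set0Pn; exists t0; rewrite inE.
  rewrite hF inE /Qf; apply/andP; split.
    by apply/forallP => i; rewrite setTI eqxx.
  by apply/existsP; exists j0; apply: subsetT.
move=> A; rewrite in_setD1 => /andP [hA0 hAF].
have hc := hcard A hAF.
have cpos : (0 < #|A|)%N by lia.
apply/andP; split.
  have hb : forall x, x \in A -> 1 / m%:R <= abundance F x <= 1 by move=> x _; rewrite gge gle1.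
  by case/andP: (avg_bounds hA0 hb).
rewrite (big_setID T) /=.
have s1 : \sum_(x in A :&: T) abundance F x <= #|A :&: T|%:R.
  apply: le_trans (ler_sum _ (fun x _ => gle1 x)) _.
  by rewrite sumr_const.
have s2 : \sum_(x in A :\: T) abundance F x <= #|A|%:R * (2 / m%:R).
  have h2 : \sum_(x in A :\: T) abundance F x <= \sum_(x in A :\: T) (2 / m%:R : rat).
    by apply: ler_sum => x; rewrite inE => /andP [hxT _]; case/andP: (part1 x hxT).
  apply: le_trans h2 _.
  rewrite sumr_const -[(2 / m%:R) *+ _]mulr_natl; apply: ler_wpM2r.
    by rewrite divr_ge0 ?ler0n.
  by rewrite ler_nat; apply: subset_leq_card; apply: subsetDl.
have hinv : 0 <= (#|A|%:R : rat)^-1 by rewrite invr_ge0 ler0n.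
apply: le_trans (ler_wpM2l hinv (lerD s1 s2)) _.
have cne : (#|A|%:R : rat) != 0 by rewrite pnatr_eq0 -lt0n.
have -> : (#|A|%:R)^-1 * (#|A :&: T|%:R + #|A|%:R * (2 / m%:R)) =
    #|A :&: T|%:R / #|A|%:R + 2 / m%:R :> rat.
  by field; rewrite cne andbT pnatr_eq0 -lt0n.
rewrite addrC lerD2l ratdiv_le ?muln_gt0 ?k0 //.
have ht : (#|A :&: T| <= m * s)%N.
  by apply: leq_trans hT; apply: subset_leq_card; apply: subsetIr.
have := leq_mul ht hc.
have := leq_mul (leq_mul ht hc) (leqnn m).
rewrite (expnS m 1) expn1; lia.
Qed.
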